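(* Fix $\epsilon_2>0$ and $(u_\pm,v_\pm)$ with $v_\pm>0$ and $u_->u_++2\epsilon_2$. For $0<\epsilon_1$ small, let $(u_*^{\epsilon_2},v_*^{\epsilon_2})$ (depending on $\epsilon_1$) be the intermediate state of the two-shock Riemann solution of the perturbed Brio system with data $(u_\pm,v_\pm)$. Then $\lim_{\epsilon_1\to0}v_*^{\epsilon_2}=+\infty$.
   Context: Perturbed Brio system: $u_t+(\tfrac12u^2+\tfrac12\epsilon_1v^2)_x=0$, $v_t+(uv-\epsilon_2v)_x=0$, $\epsilon_1,\epsilon_2>0$, $v>0$. The two-shock intermediate state $(u_*,v_* )$ satisfies $v_*>\max(v_-,v_+)$, $u_+<u_*<u_-$, $$u_*=u_-+(v_*-v_-)\frac{\epsilon_2-\sqrt{\epsilon_2^2+4\epsilon_1(v_*+v_-)^2}}{v_*+v_-},\qquad u_+=u_*+(v_+-v_* )\frac{\epsilon_2+\sqrt{\epsilon_2^2+4\epsilon_1(v_*+v_+)^2}}{v_*+v_+}.$$ *)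

(* Defs.v *)
From Stdlib Require Import Reals Lra.
Open Scope R_scope.

Definition intermediate_state (e1 e2 um vm up vp us vs : R) : Prop :=
  Rmax vm vp < vs /\ up < us /\ us < um /\
  us = um + (vs - vm) * (e2 - sqrt (e2 ^ 2 + 4 * e1 * (vs + vm) ^ 2)) / (vs + vm) /\
  up = us + (vp - vs) * (e2 + sqrt (e2 ^ 2 + 4 * e1 * (vs + vp) ^ 2)) / (vs + vp).

(* Main.v *)
Require Import Defs.
From Stdlib Require Import Reals.
From Stdlib Require Import Lra Ranalysis5.
From Coquelicot Require Import Coquelicot.
Open Scope R_scope.

Definition Fn e1 e2 vm vp v :=
  (v-vm)*(sqrt(e2^2+4*e1*(v+vm)^2) - e2)/(v+vm)
  + (v-vp)*(e2 + sqrt(e2^2+4*e1*(v+vp)^2))/(v+vp).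

Lemma sq_ge e1 e2 X : 0 < e2 -> 0 <= e1 -> e2 <= sqrt (e2^2 + 4*e1*X^2).
Proof.
  intros. rewrite <- (sqrt_pow2 e2) at 1 by lra. apply sqrt_le_1_alt. nra.
Qed.

Lemma sq_up e1 e2 X : 0 < e2 -> 0 <= e1 ->
  sqrt (e2^2 + 4*e1*X^2) <= e2 + 2*e1*X^2/e2.
Proof.
  intros. assert (0 <= 2*e1*X^2/e2).
  { unfold Rdiv. apply Rmult_le_pos. nra. left; apply Rinv_0_lt_compat; lra. }
  rewrite <- (sqrt_pow2 (e2 + 2*e1*X^2/e2)) by lra. apply sqrt_le_1_alt.
  assert (e2 * (2*e1*X^2/e2) = 2*e1*X^2) by (field; lra). nra.
Qed.

Lemma sq_lo e1 e2 X : 0 <= X -> 0 < e1 -> 2 * sqrt e1 * X <= sqrt (e2^2 + 4*e1*X^2).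
Proof.
  intros. rewrite <- (sqrt_pow2 (2 * sqrt e1 * X)).
  2:{ apply Rmult_le_pos; auto. apply Rmult_le_pos. lra. apply sqrt_pos. }
  apply sqrt_le_1_alt. pose proof (sqrt_sqrt e1). nra.
Qed.

Lemma frac_le a b T : 0 < b -> b <= a -> 0 <= T -> (a - b) * T / (a + b) <= T.
Proof.
  intros. apply Rmult_le_reg_r with (a+b). lra.
  unfold Rdiv. rewrite Rmult_assoc, Rinv_l by lra. nra.
Qed.

Lemma frac_ge a b T : 0 < b -> b <= a -> 0 <= T -> 0 <= (a - b) * T / (a + b).
Proof.
  intros. unfold Rdiv. apply Rmult_le_pos. nra. left; apply Rinv_0_lt_compat; lra.
Qed.

Lemma F_upper e1 e2 vm vp v : 0 < e2 -> 0 < e1 -> 0 < vm -> 0 < vp -> vm <= v -> vp <= v ->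
  Fn e1 e2 vm vp v <= 2*e2 + 2*e1*(v+vm)^2/e2 + 2*e1*(v+vp)^2/e2.
Proof.
  intros. unfold Fn.
  pose proof (sq_ge e1 e2 (v+vm)). pose proof (sq_ge e1 e2 (v+vp)).
  pose proof (sq_up e1 e2 (v+vm)). pose proof (sq_up e1 e2 (v+vp)).
  pose proof (frac_le v vm (sqrt (e2 ^ 2 + 4 * e1 * (v + vm) ^ 2) - e2)).
  pose proof (frac_le v vp (e2 + sqrt (e2 ^ 2 + 4 * e1 * (v + vp) ^ 2))).
  lra.
Qed.

Lemma state_F e1 e2 um vm up vp us vs : 0 < vm -> 0 < vp ->
  intermediate_state e1 e2 um vm up vp us vs -> Fn e1 e2 vm vp vs = um - up.
Proof.
  intros Hm Hp [Hv [H1 [H2 [H3 H4]]]].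
  pose proof (Rmax_l vm vp). pose proof (Rmax_r vm vp).
  unfold Fn. rewrite H4, H3. field. lra.
Qed.

Lemma F_state e1 e2 um vm up vp vs : 0 < e2 -> 0 < e1 -> 0 < vm -> 0 < vp -> Rmax vm vp < vs ->
  Fn e1 e2 vm vp vs = um - up ->
  intermediate_state e1 e2 um vm up vp
    (um + (vs - vm) * (e2 - sqrt (e2 ^ 2 + 4 * e1 * (vs + vm) ^ 2)) / (vs + vm)) vs.
Proof.
  intros He2 He1 Hm Hp Hv HF.
  pose proof (Rmax_l vm vp). pose proof (Rmax_r vm vp).
  unfold Fn in HF.
  set (A := sqrt (e2 ^ 2 + 4 * e1 * (vs + vm) ^ 2)) in *.
  set (B := sqrt (e2 ^ 2 + 4 * e1 * (vs + vp) ^ 2)) in *.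
  assert (HA : e2 < A).
  { unfold A. rewrite <- (sqrt_pow2 e2) at 1 by lra. apply sqrt_lt_1_alt. split. nra.
    assert (0 < (vs+vm)^2) by (apply pow_lt; lra). nra. }
  assert (HB : e2 <= B) by (apply sq_ge; lra).
  assert (E1 : (vs - vm) * (e2 - A) / (vs + vm) = - ((vs - vm) * (A - e2) / (vs + vm)))
    by (field; lra).
  assert (P1 : 0 < (vs - vm) * (A - e2) / (vs + vm)).
  { unfold Rdiv. apply Rmult_lt_0_compat. nra. apply Rinv_0_lt_compat; lra. }
  assert (P2 : 0 < (vs - vp) * (e2 + B) / (vs + vp)).
  { unfold Rdiv. apply Rmult_lt_0_compat. nra. apply Rinv_0_lt_compat; lra. }
  assert (E2 : (vp - vs) * (e2 + B) / (vs + vp) = - ((vs - vp) * (e2 + B) / (vs + vp)))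
    by (field; lra).
  unfold intermediate_state. fold A B. rewrite E1, E2. lra.
Qed.

Lemma F_small e1 e2 vm vp v K : 0 < e2 -> 0 < e1 -> 0 < vm -> 0 < vp -> vm <= v -> vp <= v ->
  (v+vm)^2 + (v+vp)^2 <= K -> Fn e1 e2 vm vp v <= 2*e2 + 2*e1*K/e2.
Proof.
  intros. pose proof (F_upper e1 e2 vm vp v) as U.
  assert (2*e1*(v+vm)^2/e2 + 2*e1*(v+vp)^2/e2 <= 2*e1*K/e2).
  { replace (2*e1*(v+vm)^2/e2 + 2*e1*(v+vp)^2/e2) with (2*e1*((v+vm)^2+(v+vp)^2)/e2)
      by (field; lra).
    unfold Rdiv. apply Rmult_le_compat_r. left; apply Rinv_0_lt_compat; lra. nra. }
  lra.
Qed.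

Lemma small_bound e1 e2 K delta : 0 < e2 -> 0 < K -> 0 < delta -> 0 <= e1 ->
  e1 < delta * e2 / (2*K) -> 2*e1*K/e2 < delta.
Proof.
  intros. apply Rmult_lt_reg_r with (2*K/e2).
  { unfold Rdiv. apply Rmult_lt_0_compat. lra. apply Rinv_0_lt_compat; lra. }
  replace (2*e1*K/e2 * (2*K/e2)) with (e1 * (2*K/e2)*(2*K/e2)) by (field; lra).
  replace (delta * (2*K/e2)) with (delta * e2/(2*K) * (2*K/e2)*(2*K/e2)) by (field; lra).
  assert (0 < 2*K/e2).
  { unfold Rdiv. apply Rmult_lt_0_compat. lra. apply Rinv_0_lt_compat; lra. }
  apply Rmult_lt_compat_r; auto.
Qed.

Lemma F_cont e1 e2 vm vp c v : 0 < e1 -> 0 < vm -> 0 < vp -> 0 < v ->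
  continuity_pt (fun x => Fn e1 e2 vm vp x - c) v.
Proof.
  intros.
  assert (Hd : ex_derive (fun x => Fn e1 e2 vm vp x - c) v).
  { unfold Fn. auto_derive. repeat split; try lra; (apply Rplus_le_lt_0_compat; [nra| apply Rmult_lt_0_compat; nra]). }
  apply continuity_pt_filterlim. exact (ex_derive_continuous _ _ Hd).
Qed.

Lemma F_large e1 e2 vm vp v c : 0 < e2 -> 0 < e1 -> 0 < vm -> 0 < vp -> vp <= v ->
  v = Rmax vm vp + vm + (c + e2)/(2*sqrt e1) + 1 -> 0 <= c -> c < Fn e1 e2 vm vp v.
Proof.
  intros He2 He1 Hm Hp Hvp Hv Hc. pose proof (Rmax_l vm vp). pose proof (Rmax_r vm vp).
  set (s := sqrt e1) in *. assert (Hs : 0 < s) by (apply sqrt_lt_R0; lra).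
  assert (Hq : 0 <= (c+e2)/(2*s)).
  { unfold Rdiv. apply Rmult_le_pos. lra. left; apply Rinv_0_lt_compat; lra. }
  assert (Hq2 : 2*s*((c+e2)/(2*s)) = c+e2) by (field; lra).
  unfold Fn.
  pose proof (sq_lo e1 e2 (v+vm)) as L. fold s in L.
  pose proof (frac_ge v vp (e2 + sqrt (e2 ^ 2 + 4 * e1 * (v + vp) ^ 2))) as G.
  pose proof (sq_ge e1 e2 (v+vp)).
  set (A := sqrt (e2 ^ 2 + 4 * e1 * (v + vm) ^ 2)) in *.
  assert (c < (v - vm) * (A - e2) / (v + vm)).
  { apply Rmult_lt_reg_r with (v+vm). lra.
    unfold Rdiv. rewrite Rmult_assoc, Rinv_l by lra. rewrite Rmult_1_r.
    assert (L2: 2*s*(v-vm) > c + e2) by nra.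
    nra. }
  lra.
Qed.

Theorem lemma6p1 (e2 um vm up vp : R) :
  0 < e2 -> 0 < vm -> 0 < vp -> up + 2 * e2 < um ->
  (* for small e1 > 0 the intermediate state exists *)
  (exists d, 0 < d /\ forall e1, 0 < e1 < d ->
     exists us vs, intermediate_state e1 e2 um vm up vp us vs) /\
  (* and v_* -> +infinity as e1 -> 0+ *)
  (forall M : R, exists d, 0 < d /\ forall e1 us vs, 0 < e1 < d ->
     intermediate_state e1 e2 um vm up vp us vs -> M < vs).
Proof.
  intros He2 Hm Hp Hu.
  pose proof (Rmax_l vm vp) as Ml. pose proof (Rmax_r vm vp) as Mr.
  set (delta := um - up - 2*e2).
  assert (Hdel : 0 < delta) by (unfold delta; lra).
  split.
  - set (v0 := Rmax vm vp). assert (Ml' : vm <= v0) by exact Ml. assert (Mr' : vp <= v0) by exact Mr.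
    set (K := (v0+vm)^2 + (v0+vp)^2).
    assert (HK : 0 < K). { unfold K. assert (0 < v0 + vm) by lra. assert (0 < (v0+vm)^2) by (apply pow_lt; lra). assert (0 <= (v0+vp)^2) by (apply pow_le; lra). lra. }
    exists (delta * e2 / (2*K)). split.
    { unfold Rdiv. apply Rmult_lt_0_compat. nra. apply Rinv_0_lt_compat; lra. }
    intros e1 [He1 Hd].
    set (c := um - up).
    set (v1 := Rmax vm vp + vm + (c + e2)/(2*sqrt e1) + 1).
    assert (Hs : 0 < sqrt e1) by (apply sqrt_lt_R0; lra).
    assert (Hq : 0 <= (c+e2)/(2*sqrt e1)).
    { unfold Rdiv. apply Rmult_le_pos. unfold c; lra. left; apply Rinv_0_lt_compat; lra. }
    assert (Hv01 : v0 < v1) by (unfold v1, v0; lra).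
    assert (F0 : Fn e1 e2 vm vp v0 - c < 0).
    { pose proof (F_small e1 e2 vm vp v0 K He2 He1 Hm Hp Ml' Mr' (Rle_refl _)).
      pose proof (small_bound e1 e2 K delta He2 HK Hdel (Rlt_le _ _ He1) Hd).
      unfold c, delta in *. lra. }
    assert (F1 : 0 < Fn e1 e2 vm vp v1 - c).
    { pose proof (F_large e1 e2 vm vp v1 c He2 He1 Hm Hp). unfold v1 in *.
      assert (c < Fn e1 e2 vm vp (Rmax vm vp + vm + (c + e2) / (2 * sqrt e1) + 1)).
      { apply H. lra. reflexivity. unfold c; lra. }
      lra. }
    destruct (IVT_interv (fun x => Fn e1 e2 vm vp x - c) v0 v1) as [z [Hz Fz]]; auto.
    { intros a Ha. apply F_cont; lra. }
    assert (z <> v0) by (intro E; rewrite E in Fz; lra).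
    assert (Hzv : v0 < z).
    { destruct Hz as [[Hlt|Heq] _]; auto. exfalso; apply H; auto. }
    eexists. exists z. apply F_state; try lra.
    exact Hzv. unfold c in Fz; lra.
  - intros M.
    set (M' := Rmax M (Rmax vm vp)).
    assert (M1 : M <= M') by apply Rmax_l. assert (M2 : Rmax vm vp <= M') by apply Rmax_r.
    set (K := (M'+vm)^2 + (M'+vp)^2).
    assert (HK : 0 < K) by (unfold K; assert (0 < M' + vm) by lra; assert (0 < (M'+vm)^2) by (apply pow_lt; lra); nra).
    exists (delta * e2 / (2*K)). split.
    { unfold Rdiv. apply Rmult_lt_0_compat. nra. apply Rinv_0_lt_compat; lra. }
    intros e1 us vs [He1 Hd] Hst.
    destruct (Rlt_le_dec M vs) as [|Hle]; auto. exfalso.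
    pose proof (state_F _ _ _ _ _ _ _ _ Hm Hp Hst) as HF.
    destruct Hst as [Hv _].

    assert (vs <= M') by lra.
    assert (HK2 : (vs+vm)^2 + (vs+vp)^2 <= K) by (unfold K; nra).
    pose proof (F_small e1 e2 vm vp vs K He2 He1 Hm Hp ltac:(lra) ltac:(lra) HK2).
    pose proof (small_bound e1 e2 K delta He2 HK Hdel (Rlt_le _ _ He1) Hd).
    unfold delta in *. lra.
Qed.
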